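(* Let $M=\mathbb{CP}^2\#k\overline{\mathbb{CP}^2}$. There is no reduced class $A=aH-\sum_{i=1}^k b_iE_i\in H_2(M;\mathbb Z)$ with $A\cdot A=-4$ and $\min_i b_i\ge1$ in any of the following cases: (1) $k\ge11$ and $K_{st}\cdot A\le2$; (2) $k=10$ and $K_{st}\cdot A<2$; (3) $k=10$, $K_{st}\cdot A=2$ and $\min_i b_i\ge3$.
   Context: $\{H,E_1,\dots,E_k\}$ is the standard basis of $H_2(M;\mathbb Z)$ ($H^2=1$, $E_i^2=-1$, pairwise orthogonal), and $K_{st}=-3H+\sum_{i=1}^kE_i$ is the standard canonical class. A class $aH-\sum b_iE_i$ is reduced if $b_1\ge\cdots\ge b_k\ge0$ and $a\ge b_1+b_2+b_3$. *)

(* Defs.v *)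
(* A class A = aH - sum_{i=1}^k b_i E_i in H_2(M;Z),
   M = CP^2 # k CP^2-bar, is encoded by (a, b) with a : int and
   b : seq int of size k, where b`_(i-1) = b_i (0-indexed). *)
From HB Require Import structures.
From mathcomp Require Import all_boot all_order all_algebra.
Set Implicit Arguments. Unset Strict Implicit. Unset Printing Implicit Defensive.
Import Order.TTheory GRing.Theory Num.Theory.
Local Open Scope ring_scope.

(* intersection form: H^2 = 1, E_i^2 = -1, pairwise orthogonal *)
Definition self_int (a : int) (b : seq int) : int :=
  a ^+ 2 - \sum_(x <- b) x ^+ 2.

(* K_st . A with K_st = -3H + sum E_i *)
Definition Kst_dot (a : int) (b : seq int) : int :=
  - (3 * a) + \sum_(x <- b) x.

(* reduced: b_1 >= ... >= b_k >= 0 and a >= b_1 + b_2 + b_3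
   (missing coefficients, if k < 3, are read as 0 via the default of nth) *)
Definition reduced (a : int) (b : seq int) : Prop :=
  (forall i j : nat, (i <= j)%N -> (j < size b)%N -> b`_j <= b`_i) /\
  (forall x, x \in b -> 0 <= x) /\
  b`_0 + b`_1 + b`_2 <= a.

Definition min_ge (b : seq int) (m : int) : Prop := forall x, x \in b -> m <= x.

(* Main.v *)
Require Import Defs.
From HB Require Import structures.
From mathcomp Require Import all_boot all_order all_algebra.
From mathcomp Require Import zify.
Import Order.TTheory GRing.Theory Num.Theory.
Local Open Scope ring_scope.

Lemma sum_bound (m z : int) (r : seq int) : (forall w, w \in r -> m <= w <= z) ->
  \sum_(w <- r) w^+2 <= (z+m) * \sum_(w <- r) w - m*z*(size r)%:Z.
Proof.
elim: r => [|w r IH] H; first by rewrite !big_nil /=; lia.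
rewrite !big_cons /=.
have /andP[h1 h2] := H w (mem_head _ _).
have := IH (fun v hv => H v (mem_behead (s:=w::r) hv)).
have : (w - m) * (z - w) >= 0 by rewrite mulr_ge0 // subr_ge0.
move: (\sum_(w <- r) w ^+ 2) (\sum_(w <- r) w) => Q P.
rewrite expr2 -addn1 PoszD. nia.
Qed.


Lemma arith (m c a x y z P R2 n : int) :
  0 < m -> m <= z -> z <= y -> y <= x -> x + y + z <= a ->
  a^+2 - (x^+2 + y^+2 + z^+2 + R2) = -4 ->
  R2 <= (z+m)*P - m*z*n ->
  -(3*a) + (x+y+z+P) <= c ->
  7 <= n -> 0 <= c ->
  (m = 1 /\ ((8 <= n /\ c = 2) \/ c = 1)) \/ (m = 3 /\ n = 7 /\ c = 2) -> False.
Proof.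
move=> m0 mz zy yx sa HQ HR HS n7 c0 Hc.
have p1 : (a - (x+y+z)) * (a + (x+y+z) - 3*(z+m)) >= 0.
  by apply: mulr_ge0; lia.
have p2 : (x - z) * (y - m) >= 0 by apply: mulr_ge0; lia.
have p3 : (y - z) * (z - m) >= 0 by apply: mulr_ge0; lia.
have p4 : (z + m) * (3*a + c - (x+y+z) - P) >= 0 by apply: mulr_ge0; lia.
have p5 : (n - 7) * z >= 0 by apply: mulr_ge0; lia.
move: HQ HR p1 p2 p3 p4 p5; rewrite !expr2 => HQ HR p1 p2 p3 p4 p5.
case: Hc => [[Hm [[h Hc]| Hc]]|[Hm [Hn Hc]]]; subst; try lia.
have p6 : (n - 8) * z >= 0 by apply: mulr_ge0; lia.
move: p6; rewrite ?expr2; lia.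
Qed.

Theorem proposition5p5 (k : nat) (a : int) (b : seq int) :
  size b = k ->
  reduced a b ->
  self_int a b = -4 ->
  min_ge b 1 ->
  ~ [\/ (11 <= k)%N /\ Kst_dot a b <= 2,
        k = 10%N /\ Kst_dot a b < 2
      | [/\ k = 10%N, Kst_dot a b = 2 & min_ge b 3]].
Proof.
move=> Hk [Hmono [Hnn Hred]] HQ Hm1 Hc.
have k10 : (10 <= k)%N by case: Hc => [[h _]|[h _]|[h _ _]]; subst; lia.
case: b Hk Hmono Hnn Hred HQ Hm1 Hc => [|x [|y [|z r]]] Hk Hmono Hnn Hred HQ Hm1 Hc;
  try (subst k; simpl in k10; discriminate).
move: Hred HQ Hc; rewrite /self_int /Kst_dot !big_cons /= => Hred HQ Hc.
have Hyx : y <= x by apply: (Hmono 0%N 1%N); subst k => //=.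
have Hzy : z <= y by apply: (Hmono 1%N 2%N); subst k => //=.
have Hz1 : 1 <= z by apply: Hm1; rewrite !in_cons eqxx ?orbT.
have Hsz : size r = (k - 3)%N by rewrite -Hk /=; lia.
have Hup : forall w, w \in r -> w <= z.
  move=> w wr; have := Hmono 2%N (index w r).+3 isT.
  by rewrite /= ltnS ltnS ltnS index_mem nth_index //; apply.
have key : forall m, (forall w, w \in r -> m <= w) -> 
   \sum_(w <- r) w^+2 <= (z+m) * \sum_(w <- r) w - m*z*(size r)%:Z.
  move=> m Hm; apply: sum_bound => w wr; rewrite Hup // andbT; exact: Hm.
have n7 : (7 <= (size r)%:Z) by rewrite Hsz; lia.
have HQ' : a ^+ 2 - (x ^+ 2 + y ^+ 2 + z ^+ 2 + \sum_(w <- r) w^+2) = -4 by rewrite -!addrA.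
have Hred' : x + y + z <= a by move: Hred; rewrite -!addrA.
case: Hc => [[h1 h2]|[h1 h2]|[h1 h2 h3]].
- have HR : \sum_(w <- r) w^+2 <= (z+1) * \sum_(w <- r) w - 1*z*(size r)%:Z.
    by apply: key => w wr; apply: Hm1; rewrite !in_cons wr ?orbT.
  have HS : -(3*a) + (x+y+z+\sum_(w <- r) w) <= 2 by move: h2; rewrite !addrA.
  apply: (@arith 1 2 a x y z _ _ _ isT Hz1 Hzy Hyx Hred' HQ' HR HS n7) => //.
  left; split => //; left; split => //; rewrite Hsz; lia.
- have HR : \sum_(w <- r) w^+2 <= (z+1) * \sum_(w <- r) w - 1*z*(size r)%:Z.
    by apply: key => w wr; apply: Hm1; rewrite !in_cons wr ?orbT.
  have HS : -(3*a) + (x+y+z+\sum_(w <- r) w) <= 1 by move: h2; move: (\sum_(w <- r) w) => P; lia.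
  apply: (@arith 1 1 a x y z _ _ _ isT Hz1 Hzy Hyx Hred' HQ' HR HS n7) => //.
  by left; split => //; right.
- have Hz3 : 3 <= z by apply: h3; rewrite !in_cons eqxx ?orbT.
  have HR : \sum_(w <- r) w^+2 <= (z+3) * \sum_(w <- r) w - 3*z*(size r)%:Z.
    by apply: key => w wr; apply: h3; rewrite !in_cons wr ?orbT.
  have HS : -(3*a) + (x+y+z+\sum_(w <- r) w) <= 2 by move: h2; rewrite !addrA => ->.
  apply: (@arith 3 2 a x y z _ _ _ isT Hz3 Hzy Hyx Hred' HQ' HR HS n7) => //.
  right; split => //; split => //; rewrite Hsz; lia.
Qed.
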